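(* Let $n>1$ and $1\le m\le n(n-1)$ be integers, and for each integer $i\ge1$ let $e_i=(\lceil \frac{i}{n-1}\rceil,\ n-((i-1)\bmod n))$. Then $e_m$ is distinct from each of $e_1,\dots,e_{m-1}$; that is, the arc added when constructing $\mathbb G(n,m)$ from $\mathbb G(n,m-1)$ is not already an arc of $\mathbb G(n,m-1)$.
   Context: $a\bmod b\in\{0,\dots,b-1\}$ denotes the remainder. The graphs $\mathbb G(n,m)$ on vertex set $\{1,\dots,n\}$ are built inductively: $\mathbb G(n,0)$ has no arcs, and for $1\le m\le n(n-1)$, $\mathbb G(n,m)$ is obtained from $\mathbb G(n,m-1)$ by adding the arc $e_m$ (from vertex $\lceil \frac{m}{n-1}\rceil$ to vertex $n-((m-1)\bmod n)$). *)

(* Defs.v *)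
From mathcomp Require Import all_boot.
Set Implicit Arguments. Unset Strict Implicit. Unset Printing Implicit Defensive.

Definition ceil_div (a b : nat) : nat := (a + b.-1) %/ b.

(* The arc e_i = (ceil(i/(n-1)), n - ((i-1) mod n)), as an ordered pair
   (tail, head) of vertices in {1,...,n}. *)
Definition e_arc (n i : nat) : nat * nat :=
  (ceil_div i n.-1, n - (i.-1 %% n)).

Definition arcs_G (n m : nat) : seq (nat * nat) :=
  [seq e_arc n i | i <- iota 1 m].

(* Main.v *)
Require Import Defs.
From mathcomp Require Import all_boot.
From mathcomp Require Import zify.

Lemma key (n a b : nat) : 1 < n -> a < b ->
  (a + n.-1) %/ n.-1 = (b + n.-1) %/ n.-1 -> a %% n = b %% n -> False.
Proof.
move=> Hn Hab Hq Hr.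
have Hd : 0 < n.-1 by lia.
have Ea := divn_eq (a + n.-1) n.-1.
have Eb := divn_eq (b + n.-1) n.-1.
have La := ltn_pmod (a + n.-1) Hd.
have Lb := ltn_pmod (b + n.-1) Hd.
have Fa := divn_eq a n.
have Fb := divn_eq b n.
rewrite Hq in Ea.
rewrite Hr in Fa.
set q := (b + n.-1) %/ n.-1 in Ea Eb.
set qa := a %/ n in Fa. set qb := b %/ n in Fb.
set r := b %% n in Fa Fb.
have : qa < qb.
  rewrite ltnNge; apply/negP => H.
  have : qb * n <= qa * n by rewrite leq_mul2r H orbT.
  lia.
move=> Hlt.
have : qa.+1 * n <= qb * n by rewrite leq_mul2r Hlt orbT.
rewrite mulSn. lia.
Qed.

Theorem lemma9 (n m : nat) :
  1 < n -> 1 <= m <= n * (n - 1) ->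
  (forall i, 1 <= i < m -> e_arc n m <> e_arc n i) /\
  e_arc n m \notin arcs_G n m.-1.
Proof.
move=> Hn /andP [Hm1 Hm2].
have H : forall i, 1 <= i < m -> e_arc n m <> e_arc n i.
  move=> i /andP [Hi1 Him] [E1 E2].
  have Lm := ltn_pmod m.-1 (ltnW Hn).
  have Li := ltn_pmod i.-1 (ltnW Hn).
  apply: (@key n i.-1 m.-1 Hn); first lia.
  - move: E1; rewrite /ceil_div.
    have -> : i + (n.-1).-1 = i.-1 + n.-1 by lia.
    have -> : m + (n.-1).-1 = m.-1 + n.-1 by lia.
    by [].
  - lia.
split => //.
apply/mapP => -[i]; rewrite mem_iota => /andP [Hi1 Hi2] E.
apply: (H i) => //. apply/andP; split => //. lia.
Qed.
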